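(* Up to isomorphism there is exactly one two-dimensional evolution algebra $A$ over a field $\mathbb{K}$ such that $A^3\neq0$, $(A^2)^2\neq0$ and the annihilator $\mathrm{Ann}(A)=\{a\in A: aA=0\}$ is nonzero. Its square is $\mathfrak{D}_7\cup\mathfrak{D}_9$.
   Context: An evolution algebra over $\mathbb{K}$ is a $\mathbb{K}$-algebra with a basis $\{e_i\}$ (natural basis) such that $e_ie_j=0$ for $i\neq j$. $A^2$ is the span of $\{xy:x,y\in A\}$, $A^3$ the span of $\{xy:x\in A,y\in A^2\}$, $(A^2)^2$ the span of $\{xy:x,y\in A^2\}$. For a natural basis $\{e_1,e_2\}$ with $e_1^2=\omega_{11}e_1+\omega_{21}e_2$, $e_2^2=\omega_{12}e_1+\omega_{22}e_2$, its pseudo-square is the subset of $\{L,T,R,D\}$ where $L,T,R,D$ are present iff $\omega_{11},\omega_{12},\omega_{22},\omega_{21}$ respectively are nonzero; the square of $A$ is the set of pseudo-squares of all natural bases; $\mathfrak{D}_7=\{\{L\},\{R\}\}$, $\mathfrak{D}_9=\{\{L,D\},\{T,R\}\}$. *)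

(* Defs.v *)
From HB Require Import structures.
From mathcomp Require Import all_boot all_order all_algebra.
Set Implicit Arguments. Unset Strict Implicit. Unset Printing Implicit Defensive.
Import GRing.Theory.
Local Open Scope ring_scope.

Inductive letter := sqL | sqT | sqR | sqD.

Definition letter_to (x : letter) : 'I_4 :=
  match x with sqL => inord 0 | sqT => inord 1 | sqR => inord 2 | sqD => inord 3 end.
Definition letter_of (i : 'I_4) : letter :=
  match val i with 0 => sqL | 1 => sqT | 2 => sqR | _ => sqD end%N.
Lemma letter_toK : cancel letter_to letter_of.
Proof. by case; rewrite /letter_of /= inordK. Qed.
HB.instance Definition _ := Finite.copy letter (can_type letter_toK).

(* A two-dimensional K-algebra, with carrier K^2 = 'rV[K]_2, given by its
   structure constants c i j = eps_i * eps_j (eps = standard basis). Every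
   bilinear product on K^2 arises this way. *)
Definition alg2 (K : fieldType) := 'I_2 -> 'I_2 -> 'rV[K]_2.

Definition amul (K : fieldType) (c : alg2 K) (x y : 'rV[K]_2) : 'rV[K]_2 :=
  \sum_(i < 2) \sum_(j < 2) (x 0 i * y 0 j) *: c i j.

Definition natural_basis (K : fieldType) (c : alg2 K) (e1 e2 : 'rV[K]_2) : Prop :=
  row_free (col_mx e1 e2) /\ amul c e1 e2 = 0 /\ amul c e2 e1 = 0.

Definition is_evolution (K : fieldType) (c : alg2 K) : Prop :=
  exists e1 e2, natural_basis c e1 e2.

Definition in_span (K : fieldType) (S : 'rV[K]_2 -> Prop) (v : 'rV[K]_2) : Prop :=
  exists (n : nat) (a : 'I_n -> K) (w : 'I_n -> 'rV[K]_2),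
    (forall i, S (w i)) /\ v = \sum_(i < n) a i *: w i.

Definition A2 (K : fieldType) (c : alg2 K) : 'rV[K]_2 -> Prop :=
  in_span (fun w => exists x y, w = amul c x y).
Definition A3 (K : fieldType) (c : alg2 K) : 'rV[K]_2 -> Prop :=
  in_span (fun w => exists x y, A2 c y /\ w = amul c x y).
Definition A2sq (K : fieldType) (c : alg2 K) : 'rV[K]_2 -> Prop :=
  in_span (fun w => exists x y, A2 c x /\ A2 c y /\ w = amul c x y).

Definition nonzero_space (K : fieldType) (S : 'rV[K]_2 -> Prop) : Prop :=
  exists v, S v /\ v <> 0.

Definition Ann (K : fieldType) (c : alg2 K) (a : 'rV[K]_2) : Prop :=
  forall x, amul c a x = 0.

Definition alg_iso (K : fieldType) (c1 c2 : alg2 K) : Prop :=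
  exists f : 'M[K]_2, f \in unitmx /\
    forall x y, amul c2 (x *m f) (y *m f) = amul c1 x y *m f.

Definition pseudo_square (K : fieldType) (c : alg2 K) (e1 e2 : 'rV[K]_2)
    (P : {set letter}) : Prop :=
  exists w11 w21 w12 w22 : K,
    amul c e1 e1 = w11 *: e1 + w21 *: e2 /\
    amul c e2 e2 = w12 *: e1 + w22 *: e2 /\
    P = [set l | match l with
                 | sqL => w11 != 0 | sqT => w12 != 0
                 | sqR => w22 != 0 | sqD => w21 != 0 end].

Definition square (K : fieldType) (c : alg2 K) (P : {set letter}) : Prop :=
  exists e1 e2, natural_basis c e1 e2 /\ pseudo_square c e1 e2 P.

Definition D7 : {set {set letter}} := [set [set sqL]; [set sqR]].
Definition D9 : {set {set letter}} := [set [set sqL; sqD]; [set sqT; sqR]].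

Definition cor_hyp (K : fieldType) (c : alg2 K) : Prop :=
  [/\ is_evolution c, nonzero_space (A3 c), nonzero_space (A2sq c)
    & nonzero_space (Ann c)].

(* Main.v *)
Require Import Defs.
From HB Require Import structures.
From mathcomp Require Import all_boot all_order all_algebra.
From mathcomp Require Import ring.
Set Implicit Arguments. Unset Strict Implicit. Unset Printing Implicit Defensive.
Import GRing.Theory.
Section S.
Variable K : fieldType.
Local Open Scope ring_scope.

Lemma det22 (A : 'M[K]_2) : \det A = A 0 0 * A 1 1 - A 0 1 * A 1 0.
Proof.
rewrite (expand_det_row _ 0) !big_ord_recl big_ord0 /cofactor !det_mx11 !mxE /=.
have -> : lift 0 (0 : 'I_1) = 1 :> 'I_2 by apply/val_inj.
rewrite !expr0 !expr1 !mul1r. 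
have -> : lift 1 (0 : 'I_1) = 0 :> 'I_2 by apply/val_inj.
ring.
Qed.

Definition det2 (e1 e2 : 'rV[K]_2) := e1 0 0 * e2 0 1 - e1 0 1 * e2 0 0.
Definition mat2 (e1 e2 : 'rV[K]_2) : 'M[K]_2 :=
  \matrix_(i, j) (if i == 0 then e1 0 j else e2 0 j).

Lemma col_mat2 (e1 e2 : 'rV[K]_2) : col_mx e1 e2 = mat2 e1 e2.
Proof.
apply/matrixP => i j; rewrite !mxE.
case: splitP => k hk; rewrite (ord1 k).
  by have -> : i == 0 by apply/eqP/val_inj; rewrite /= hk (ord1 k).
by have -> : (i == 0) = false by apply/negbTE; apply/eqP => /(congr1 val); rewrite /= hk.
Qed.

Lemma unit_mat2 e1 e2 : (mat2 e1 e2 \in unitmx) = (det2 e1 e2 != 0).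
Proof. by rewrite unitmxE unitfE det22 !mxE. Qed.

Lemma free_det2 e1 e2 : row_free (col_mx e1 e2) = (det2 e1 e2 != 0).
Proof. by rewrite col_mat2 row_free_unit unit_mat2. Qed.


Implicit Types (c : alg2 K) (x y z u v : 'rV[K]_2).

Lemma amulDl c x y z : amul c (x + y) z = amul c x z + amul c y z.
Proof.
rewrite /amul -big_split; apply: eq_bigr => i _; rewrite -big_split.
by apply: eq_bigr => j _; rewrite !mxE mulrDl scalerDl.
Qed.
Lemma amulDr c x y z : amul c z (x + y) = amul c z x + amul c z y.
Proof.
rewrite /amul -big_split; apply: eq_bigr => i _; rewrite -big_split.
by apply: eq_bigr => j _; rewrite !mxE mulrDr scalerDl.
Qed.
Lemma amulZl c a x z : amul c (a *: x) z = a *: amul c x z.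
Proof.
rewrite /amul scaler_sumr; apply: eq_bigr => i _; rewrite scaler_sumr.
by apply: eq_bigr => j _; rewrite !mxE scalerA mulrA.
Qed.
Lemma amulZr c a x z : amul c z (a *: x) = a *: amul c z x.
Proof.
rewrite /amul scaler_sumr; apply: eq_bigr => i _; rewrite scaler_sumr.
by apply: eq_bigr => j _; rewrite !mxE scalerA mulrCA.
Qed.

Lemma expand c u v a b a' b' : amul c u v = 0 -> amul c v u = 0 ->
  amul c (a *: u + b *: v) (a' *: u + b' *: v) =
  (a * a') *: amul c u u + (b * b') *: amul c v v.
Proof.
move=> huv hvu.
rewrite !amulDl !amulDr !amulZl !amulZr huv hvu !scaler0 addr0 add0r !scalerA.
by rewrite [a * a']mulrC [b * b']mulrC.
Qed.

Lemma det2_comb u v a b a' b' :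
  det2 (a *: u + b *: v) (a' *: u + b' *: v) = (a * b' - b * a') * det2 u v.
Proof. rewrite /det2 !mxE; ring. Qed.

Lemma comb2 u v w w' a b a' b' :
  w *: (a *: u + b *: v) + w' *: (a' *: u + b' *: v) =
  (w * a + w' * a') *: u + (w * b + w' * b') *: v.
Proof. apply/rowP => j; rewrite !mxE; ring. Qed.

Lemma indep u v a b a' b' : det2 u v != 0 ->
  a *: u + b *: v = a' *: u + b' *: v -> a = a' /\ b = b'.
Proof.
move=> hd E.
have E0 := congr1 (fun z : 'rV[K]_2 => z 0 0) E.
have E1 := congr1 (fun z : 'rV[K]_2 => z 0 1) E.
rewrite /= !mxE in E0 E1.
have h1 : (a - a') * det2 u v = 0.
  transitivity (v 0 1 * (a * u 0 0 + b * v 0 0 - (a' * u 0 0 + b' * v 0 0))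
               - v 0 0 * (a * u 0 1 + b * v 0 1 - (a' * u 0 1 + b' * v 0 1))).
    rewrite /det2; ring.
  by rewrite E0 E1 !subrr !mulr0 subrr.
have h2 : (b - b') * det2 u v = 0.
  transitivity (u 0 0 * (a * u 0 1 + b * v 0 1 - (a' * u 0 1 + b' * v 0 1))
               - u 0 1 * (a * u 0 0 + b * v 0 0 - (a' * u 0 0 + b' * v 0 0))).
    rewrite /det2; ring.
  by rewrite E0 E1 !subrr !mulr0 subrr.
move/eqP: h1; move/eqP: h2; rewrite !mulf_eq0 (negbTE hd) !orbF !subr_eq0.
by move=> /eqP -> /eqP ->.
Qed.

Lemma cramer u v x : det2 u v != 0 ->
  exists a b, x = a *: u + b *: v.
Proof.
move=> hd.
exists ((x 0 0 * v 0 1 - x 0 1 * v 0 0) / det2 u v).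
exists ((u 0 0 * x 0 1 - u 0 1 * x 0 0) / det2 u v).
apply/rowP => j; rewrite !mxE.
rewrite /det2 in hd *.
case: (boolP (j == 0)) => [/eqP -> | hj].
  by field.
have -> : j = 1 by apply/val_inj; case: j hj => [[|[|]]] //.
by field.
Qed.


Lemma span_mult (S : 'rV[K]_2 -> Prop) s v :
  (forall w, S w -> exists t, w = t *: s) -> in_span S v -> exists t, v = t *: s.
Proof.
move=> hS [n [a [w [hw ->]]]].
have /fin_all_exists [t ht] : forall i, exists t, w i = t *: s by move=> i; exact: hS.
exists (\sum_i a i * t i); rewrite scaler_suml; apply: eq_bigr => i _.
by rewrite ht scalerA.
Qed.

Definition normal c u v := [/\ det2 u v != 0, amul c u u = u, amul c u v = 0,
  amul c v u = 0 & amul c v v = 0].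

Lemma nf_aux c e1 e2 : det2 e1 e2 != 0 -> amul c e1 e2 = 0 -> amul c e2 e1 = 0 ->
  amul c e2 e2 = 0 -> nonzero_space (A3 c) -> exists u v, normal c u v.
Proof.
move=> hd h12 h21 h22 [w [hw wne]].
set s1 := amul c e1 e1.
have prod x y : exists t, amul c x y = t *: s1.
  have [a [b ->]] := cramer x hd; have [a' [b' ->]] := cramer y hd.
  by exists (a * a'); rewrite expand // h22 scaler0 addr0.
have hA2 y : A2 c y -> exists t, y = t *: s1.
  by apply: span_mult => z [x [y' ->]]; exact: prod.
have [p [q hs1]] := cramer s1 hd.
have hp : p != 0.
  apply/negP => /eqP p0; apply: wne.
  have [t ->] : exists t, w = t *: (0 : 'rV[K]_2); last by rewrite scaler0.
  apply: span_mult hw => z [x [y [/hA2 [t ->] ->]]].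
  exists 0; rewrite scaler0 amulZr.
  have [a [b ->]] := cramer x hd.
  by rewrite hs1 expand // h22 p0 mulr0 scale0r scaler0 add0r scaler0.
exists (p^-1 *: e1 + (q / p ^+ 2) *: e2), (0 *: e1 + 1 *: e2); split.
- by rewrite det2_comb mulr1 mulr0 subr0 mulf_neq0 ?invr_eq0.
- rewrite expand // h22 scaler0 addr0; rewrite -/s1 hs1; apply/rowP => j; rewrite !mxE.
  by field.
- by rewrite expand // h22 mulr0 scale0r scaler0 addr0.
- by rewrite expand // h22 mul0r scale0r scaler0 addr0.
- by rewrite expand // h22 mul0r scale0r scaler0 addr0.
Qed.

Lemma nf c : cor_hyp c -> exists u v, normal c u v.
Proof.
case=> [[e1 [e2 [hfree [h12 h21]]]] hA3 _ [w [hw wne]]].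
rewrite free_det2 in hfree.
have [a [b ew]] := cramer w hfree.
have X1 := hw (1 *: e1 + 0 *: e2); have X2 := hw (0 *: e1 + 1 *: e2).
rewrite ew expand // mulr1 mulr0 scale0r addr0 in X1.
rewrite ew expand // mulr1 mulr0 scale0r add0r in X2.
have [a0 | anz] := eqVneq a 0.
  have bnz : b != 0.
    by apply/negP => /eqP b0; apply: wne; rewrite ew a0 b0 !scale0r addr0.
  move/eqP: X2; rewrite scaler_eq0 (negbTE bnz) /= => /eqP h22.
  exact: (nf_aux hfree h12 h21 h22 hA3).
move/eqP: X1; rewrite scaler_eq0 (negbTE anz) /= => /eqP h11.
have hd' : det2 e2 e1 != 0 by move: hfree; rewrite /det2 -oppr_eq0; congr (_ != 0); ring.
exact: (nf_aux hd' h21 h12 h11 hA3).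
Qed.


Lemma leq_false (x y : letter) : x <> y -> (x == y) = false.
Proof. by move=> h; apply/eqP. Qed.

Definition PS (w11 w21 w12 w22 : K) : {set letter} :=
  [set l | match l with
           | sqL => w11 != 0 | sqT => w12 != 0
           | sqR => w22 != 0 | sqD => w21 != 0 end].

Lemma scal a b a' b' w11 w21 w12 w22 : a * b' - b * a' != 0 -> a * a' = 0 ->
  a * a = w11 * a + w21 * a' -> 0 = w11 * b + w21 * b' ->
  a' * a' = w12 * a + w22 * a' -> 0 = w12 * b + w22 * b' ->
  PS w11 w21 w12 w22 \in D7 :|: D9.
Proof.
move=> hd /eqP; rewrite mulf_eq0 => /orP [/eqP a0 | /eqP a'0] E1 E2 E3 E4.
- subst a. move: hd; rewrite mul0r add0r oppr_eq0 mulf_eq0 negb_or => /andP [bnz a'nz].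
  have w21z : w21 = 0.
    by move/eqP: E1; rewrite mulr0 mulr0 add0r eq_sym mulf_eq0 (negbTE a'nz) orbF => /eqP.
  have w11z : w11 = 0.
    by move/eqP: E2; rewrite w21z mul0r addr0 eq_sym mulf_eq0 (negbTE bnz) orbF => /eqP.
  have w22e : w22 = a'.
    apply: (mulIf a'nz); by rewrite E3 mulr0 add0r.
  have w12e : w12 * b = - (a' * b').
    by apply/eqP; rewrite -subr_eq0 opprK E4 w22e.
  have [b'0 | b'nz] := eqVneq b' 0.
  + have w12z : w12 = 0.
      by move/eqP: w12e; rewrite b'0 mulr0 oppr0 mulf_eq0 (negbTE bnz) orbF => /eqP.
    rewrite !inE; apply/orP; left; apply/orP; right; apply/eqP/setP; case;
      by rewrite !inE /= ?w11z ?w12z ?w21z ?w22e ?eqxx ?leq_false ?a'nz.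

  + have w12nz : w12 != 0.
      apply/negP => /eqP w0; move: w12e; rewrite w0 mul0r => /esym/eqP.
      by rewrite oppr_eq0 mulf_eq0 (negbTE a'nz) (negbTE b'nz).
    rewrite !inE; apply/orP; right; apply/orP; right; apply/eqP/setP; case;
      by rewrite !inE /= ?w11z ?w12nz ?w21z ?w22e ?eqxx ?leq_false ?a'nz.
- subst a'. move: hd; rewrite mulr0 subr0 mulf_eq0 negb_or => /andP [anz b'nz].
  have w11e : w11 = a.
    apply: (mulIf anz); by rewrite E1 mulr0 addr0.
  have w12z : w12 = 0.
    by move/eqP: E3; rewrite mulr0 mulr0 addr0 eq_sym mulf_eq0 (negbTE anz) orbF => /eqP.
  have w22z : w22 = 0.
    by move/eqP: E4; rewrite w12z mul0r add0r eq_sym mulf_eq0 (negbTE b'nz) orbF => /eqP.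
  have w21e : w21 * b' = - (a * b).
    by apply/eqP; rewrite -subr_eq0 opprK addrC E2 w11e.
  have [b0 | bnz] := eqVneq b 0.
  + have w21z : w21 = 0.
      by move/eqP: w21e; rewrite b0 mulr0 oppr0 mulf_eq0 (negbTE b'nz) orbF => /eqP.
    rewrite !inE; apply/orP; left; apply/orP; left; apply/eqP/setP; case;
      by rewrite !inE /= ?w11e ?w12z ?w21z ?w22z ?eqxx ?leq_false ?anz.
  + have w21nz : w21 != 0.
      apply/negP => /eqP w0; move: w21e; rewrite w0 mul0r => /esym/eqP.
      by rewrite oppr_eq0 mulf_eq0 (negbTE anz) (negbTE bnz).
    rewrite !inE; apply/orP; right; apply/orP; left; apply/eqP/setP; case;
      by rewrite !inE /= ?w11e ?w12z ?w21nz ?w22z ?eqxx ?leq_false ?anz.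
Qed.


Lemma det2_u u v : det2 u v != 0 -> u != 0.
Proof. by apply: contraNneq => ->; rewrite /det2 !mxE !mul0r subrr. Qed.

Lemma sq_fwd c u v P : normal c u v -> square c P -> P \in D7 :|: D9.
Proof.
case=> hd huu huv hvu hvv [e1 [e2 [[hfree [h12 _]] [w11 [w21 [w12 [w22 [E1 [E2 ->]]]]]]]]].
rewrite free_det2 in hfree.
have [a [b ee1]] := cramer e1 hd; have [a' [b' ee2]] := cramer e2 hd.
subst e1 e2.
move: hfree; rewrite det2_comb mulf_eq0 negb_or => /andP [hfree _].
rewrite expand // huu hvv scaler0 addr0 in h12.
move/eqP: h12; rewrite scaler_eq0 (negbTE (det2_u hd)) orbF => /eqP h12.
rewrite expand // huu hvv scaler0 addr0 comb2 -[(a * a) *: u]addr0 -(scale0r v) in E1.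
rewrite expand // huu hvv scaler0 addr0 comb2 -[(a' * a') *: u]addr0 -(scale0r v) in E2.
have [F1 F2] := indep hd E1; have [F3 F4] := indep hd E2.
exact: (scal hfree h12 F1 F2 F3 F4).
Qed.

Lemma sq_bwd_aux c u v a b a' b' w11 w21 w12 w22 : normal c u v ->
  a * b' - b * a' != 0 -> a * a' = 0 ->
  a * a = w11 * a + w21 * a' -> 0 = w11 * b + w21 * b' ->
  a' * a' = w12 * a + w22 * a' -> 0 = w12 * b + w22 * b' ->
  square c (PS w11 w21 w12 w22).
Proof.
case=> hd huu huv hvu hvv hd' h0 E1 E2 E3 E4.
exists (a *: u + b *: v), (a' *: u + b' *: v); split; [split; [|split] |].
- by rewrite free_det2 det2_comb mulf_neq0.
- by rewrite expand // huu hvv scaler0 addr0 h0 scale0r.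
- by rewrite expand // huu hvv scaler0 addr0 mulrC h0 scale0r.
exists w11, w21, w12, w22; split; [|split] => //.
- by rewrite expand // huu hvv scaler0 addr0 comb2 -E1 -E2 scale0r addr0.
- by rewrite expand // huu hvv scaler0 addr0 comb2 -E3 -E4 scale0r addr0.
Qed.

Lemma sq_bwd c u v P : normal c u v -> P \in D7 :|: D9 -> square c P.
Proof.
move=> hn; rewrite !inE => /orP [/orP [] | /orP []] /eqP ->.
- have -> : [set sqL] = PS 1 0 0 0.
    by apply/setP; case; rewrite !inE /= ?eqxx ?leq_false ?oner_eq0.
  apply: (sq_bwd_aux (a := 1) (b := 0) (a' := 0) (b' := 1) hn);
    rewrite ?mulr0 ?mul0r ?mulr1 ?mul1r ?addr0 ?add0r ?subr0 ?oner_eq0 //.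
- have -> : [set sqR] = PS 0 0 0 1.
    by apply/setP; case; rewrite !inE /= ?eqxx ?leq_false ?oner_eq0.
  apply: (sq_bwd_aux (a := 0) (b := 1) (a' := 1) (b' := 0) hn);
    rewrite ?mulr0 ?mul0r ?mulr1 ?mul1r ?addr0 ?add0r ?subr0 ?sub0r ?oppr_eq0 ?oner_eq0 //.
- have -> : [set sqL; sqD] = PS 1 (-1) 0 0.
    by apply/setP; case; rewrite !inE /= ?eqxx ?leq_false ?oppr_eq0 ?oner_eq0.
  apply: (sq_bwd_aux (a := 1) (b := 1) (a' := 0) (b' := 1) hn);
    rewrite ?mulr0 ?mul0r ?mulr1 ?mul1r ?addr0 ?add0r ?subr0 ?oner_eq0 ?subrr //.
- have -> : [set sqT; sqR] = PS 0 0 (-1) 1.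
    by apply/setP; case; rewrite !inE /= ?eqxx ?leq_false ?oppr_eq0 ?oner_eq0.
  apply: (sq_bwd_aux (a := 0) (b := 1) (a' := 1) (b' := 1) hn);
    rewrite ?mulr0 ?mul0r ?mulr1 ?mul1r ?addr0 ?add0r ?subr0 ?sub0r ?oppr_eq0 ?oner_eq0 ?addNr //.
Qed.


Definition vec2 (a b : K) : 'rV[K]_2 := \row_(j < 2) (if j == 0 then a else b).
Definition c0 : alg2 K := fun i j => if (i == 0) && (j == 0) then vec2 1 0 else 0.

Lemma amul_c0 x y : amul c0 x y = (x 0 0 * y 0 0) *: vec2 1 0.
Proof.
by rewrite /amul !big_ord_recl !big_ord0 /c0 /= !scaler0 !addr0.
Qed.

Lemma mulF x u v : x *m mat2 u v = x 0 0 *: u + x 0 1 *: v.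
Proof.
apply/rowP => j; rewrite !mxE !big_ord_recl big_ord0 !mxE /= addr0.
by have -> : lift ord0 ord0 = 1 :> 'I_2 by apply/val_inj.
Qed.

Lemma iso_nf c u v : normal c u v ->
  forall x y, amul c (x *m mat2 u v) (y *m mat2 u v) = amul c0 x y *m mat2 u v.
Proof.
case=> hd huu huv hvu hvv x y.
rewrite !mulF expand // huu hvv scaler0 addr0 amul_c0 /vec2 !mxE /=.
by rewrite mulr1 mulr0 scale0r addr0.
Qed.

Lemma iso2 c1 c2 u1 v1 u2 v2 : normal c1 u1 v1 -> normal c2 u2 v2 -> alg_iso c1 c2.
Proof.
move=> n1 n2.
have hF1 : mat2 u1 v1 \in unitmx by rewrite unit_mat2; case: n1.
have hF2 : mat2 u2 v2 \in unitmx by rewrite unit_mat2; case: n2.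
exists (invmx (mat2 u1 v1) *m mat2 u2 v2); split.
  by rewrite unitmx_mul unitmx_inv hF1 hF2.
move=> x y; rewrite !mulmxA (iso_nf n2).
have -> : amul c1 x y = amul c0 (x *m invmx (mat2 u1 v1)) (y *m invmx (mat2 u1 v1)) *m mat2 u1 v1.
  by rewrite -(iso_nf n1) !mulmxKV.
by rewrite mulmxK.
Qed.

Lemma c0_normal : normal c0 (vec2 1 0) (vec2 0 1).
Proof.
split; rewrite ?amul_c0 /det2 !mxE /= ?mulr1 ?mulr0 ?mul0r ?subr0 ?oner_eq0 ?scale0r ?scale1r //.
Qed.

Lemma c0_hyp : cor_hyp c0.
Proof.
have A2e : A2 c0 (vec2 1 0).
  exists 1%N, (fun _ => 1), (fun _ => vec2 1 0); split.
    by move=> _; exists (vec2 1 0), (vec2 1 0); rewrite amul_c0 !mxE /= mulr1 scale1r.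
  by rewrite big_ord1 scale1r.
have ne : vec2 1 0 <> 0.
  by move/(congr1 (fun z : 'rV[K]_2 => z 0 0)); rewrite !mxE /=; apply/eqP; rewrite oner_eq0.
split.
- exists (vec2 1 0), (vec2 0 1); split; first by rewrite free_det2 /det2 !mxE /= mulr1 mulr0 subr0 oner_eq0.
  by split; rewrite amul_c0 !mxE /= ?mulr0 ?mul0r scale0r.
- exists (vec2 1 0); split => //.
  exists 1%N, (fun _ => 1), (fun _ => vec2 1 0); split.
    by move=> _; exists (vec2 1 0), (vec2 1 0); split => //; rewrite amul_c0 !mxE /= mulr1 scale1r.
  by rewrite big_ord1 scale1r.
- exists (vec2 1 0); split => //.
  exists 1%N, (fun _ => 1), (fun _ => vec2 1 0); split.
    by move=> _; exists (vec2 1 0), (vec2 1 0); split => //; split => //; rewrite amul_c0 !mxE /= mulr1 scale1r.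
  by rewrite big_ord1 scale1r.
- exists (vec2 0 1); split; last by move/(congr1 (fun z : 'rV[K]_2 => z 0 1)); rewrite !mxE /=; apply/eqP; rewrite oner_eq0.
  by move=> x; rewrite amul_c0 !mxE /= mul0r scale0r.
Qed.

End S.

Unset Implicit Arguments.

Theorem corollary3p14 (K : fieldType) :
  (exists c : alg2 K, cor_hyp c) /\
  (forall c1 c2 : alg2 K, cor_hyp c1 -> cor_hyp c2 -> alg_iso c1 c2) /\
  (forall c : alg2 K, cor_hyp c ->
     forall P : {set letter}, square c P <-> P \in D7 :|: D9).
Proof.
split; first by exists (c0 K); exact: c0_hyp.
split.
  move=> c1 c2 /nf [u1 [v1 n1]] /nf [u2 [v2 n2]]; exact: iso2 n1 n2.
move=> c /nf [u [v n]] P; split; [exact: sq_fwd n | exact: sq_bwd n].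
Qed.
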